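(* Let $r\in\mathbb{C}$ and let $m,n$ be positive integers. Then $$\sum_{k=0}^n(-1)^k\binom{r-1}{k}\sum_{j=m}^{k+1}\binom{k}{j-1}\frac{s(j,m)}{j!}=(-1)^n\binom{r-1}{n}\frac{1}{m!}H_{n+1}(m)-\frac{1}{m!}\sum_{k=0}^n(-1)^k\binom{r}{k}H_k(m).$$ In particular, $\sum_{k=0}^n\frac{(-1)^k}{k+1}\binom{r-1}{k}=(-1)^n\binom{r-1}{n}H_{n+1}-\sum_{k=0}^n(-1)^k\binom{r}{k}H_k$.
   Context: For integers $m\ge 1$, $n\ge 0$, the multiple harmonic-like numbers are $H_n(m)=\sum_{1\le k_1+k_2+\cdots+k_m\le n}\frac{1}{k_1k_2\cdots k_m}$ (sum over positive integers $k_1,\dots,k_m$), with $H_n(0)=1$ for $n\ge 0$ and $H_0(m)=0$ for $m\ge1$. $H_n=H_n(1)=\sum_{k=1}^n\frac1k$. The (signed) Stirling numbers of the first kind $s(n,k)$ are defined by $\sum_{n\ge k}s(n,k)\frac{z^n}{n!}=\frac{\ln^k(1+z)}{k!}$, with $s(n,k)=0$ for $n<k$. For complex $x$, $\binom{x}{k}=\frac{x(x-1)\cdots(x-k+1)}{k!}$. *)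

(* Defs.v *)
From mathcomp Require Import all_boot all_algebra.
From mathcomp Require Export reals complex.
Set Implicit Arguments. Unset Strict Implicit. Unset Printing Implicit Defensive.
Import GRing.Theory Num.Theory.
Local Open Scope ring_scope.

Definition gbinom (F : fieldType) (x : F) (k : nat) : F :=
  (\prod_(i < k) (x - i%:R)) / (k`!)%:R.

(* Signed Stirling numbers of the first kind, via the standard recurrence
   s(0,0)=1, s(0,k+1)=0, s(n+1,0)=0, s(n+1,k+1) = s(n,k) - n s(n,k+1),
   equivalently sum_{n>=k} s(n,k) z^n/n! = ln^k(1+z)/k!. *)
Fixpoint stirling1 (n k : nat) : int :=
  match n, k with
  | 0, 0 => 1
  | 0, _.+1 => 0
  | _.+1, 0 => 0
  | n'.+1, k'.+1 => stirling1 n' k' - (n'%:Z) * stirling1 n' k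
  end.

(* Tuples are encoded as finite functions 'I_m -> 'I_n.+1
   (each positive k_i with sum <= n is automatically <= n). *)
Definition Hm (F : fieldType) (m n : nat) : F :=
  \sum_(f : {ffun 'I_m -> 'I_n.+1} |
          [forall i, (0 < f i)%N] && (\sum_(i < m) (f i : nat) <= n)%N)
     (\prod_(i < m) ((f i : nat)%:R : F))^-1.

Definition harm (F : fieldType) (n : nat) : F :=
  \sum_(1 <= k < n.+1) (k%:R : F)^-1.

(* Main.v *)
Require Import Defs.
From mathcomp Require Import all_boot all_algebra.
From mathcomp Require Import reals complex ring zify.
Import GRing.Theory Num.Theory.
Local Open Scope ring_scope.

Section S.
Variable F : numFieldType.

Lemma fact_neq0 n : (n`!)%:R != 0 :> F.
Proof. by rewrite pnatr_eq0 -lt0n fact_gt0. Qed.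

Lemma gbinom0 (x : F) : gbinom x 0 = 1.
Proof. by rewrite /gbinom big_ord0 fact0 divr1. Qed.

Lemma gbinom_pascal (r : F) k :
  gbinom r k.+1 = gbinom (r - 1) k.+1 + gbinom (r - 1) k.
Proof.
rewrite /gbinom big_ord_recl big_ord_recr /=.
have -> : \prod_(i < k) (r - (bump 0 i)%:R) = \prod_(i < k) (r - 1 - i%:R).
  by apply: eq_bigr => i _; rewrite /bump leq0n add1n -natr1; ring.
set p := \prod_(i < k) _.
rewrite factS natrM.
have h1 := fact_neq0 k.
have h2 : (k.+1)%:R != 0 :> F by rewrite pnatr_eq0.
rewrite subr0.
field. by rewrite h1 /=; move: h2; rewrite -natr1 addrC.
Qed.

Lemma telescope (r : F) (a h : nat -> F) n : h 0%N = 0 ->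
  (forall k, a k = h k.+1 - h k) ->
  \sum_(0 <= k < n.+1) (-1) ^+ k * gbinom (r - 1) k * a k =
  (-1) ^+ n * gbinom (r - 1) n * h n.+1
   - \sum_(0 <= k < n.+1) (-1) ^+ k * gbinom r k * h k.
Proof.
move=> h0 ha; elim: n => [|n IH].
  by rewrite !big_nat1 !expr0 !gbinom0 ha h0; ring.
rewrite [in LHS]big_nat_recr //= IH [in RHS]big_nat_recr //= (gbinom_pascal r n) ha exprS; ring.
Qed.

Definition w (i : nat) : F := (i%:R)^-1.
Definition P (N : nat) : {poly F} := \poly_(i < N) w i.

Fixpoint t (m s : nat) : F :=
  match m with
  | 0 => (s == 0%N)%:R
  | m'.+1 => \sum_(i < s.+1) w i * t m' (s - i)
  end.

Lemma coefPexp m s N : (s < N)%N -> (P N ^+ m)`_s = t m s.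
Proof.
elim: m s => [|m IH] s hs /=.
  by rewrite expr0 coef1.
rewrite exprS coefM; apply: eq_bigr => i _.
rewrite IH; last by apply: leq_ltn_trans hs; apply: leq_subr.
rewrite coef_poly (leq_ltn_trans _ hs) //.
by rewrite -ltnS.
Qed.

Lemma sum_ind N d : \sum_(s < N) (((s : nat) == d)%:R : F) = (d < N)%:R.
Proof.
elim: N => [|N IH]; first by rewrite big_ord0 ltn0.
rewrite big_ord_recr /= IH ltnS.
by case: (ltngtP d N) => h; rewrite ?addr0 ?add0r.
Qed.

Lemma Hm_poly m n : Hm F m n = \sum_(s < n.+1) (P n.+1 ^+ m)`_s.
Proof.
have -> : P n.+1 ^+ m = \prod_(i < m) P n.+1 by rewrite prodr_const card_ord.
rewrite /P poly_def bigA_distr_bigA /=.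
under eq_bigr => s _ do rewrite coef_sum.
rewrite exchange_big /= /Hm big_mkcond /=; apply: eq_bigr => f _.
have -> : \prod_(i < m) (w (f i) *: 'X^(f i)) =
    (\prod_(i < m) w (f i)) *: 'X^(\sum_(i < m) (f i : nat)).
  rewrite (big_morph (fun e => 'X^e) (exprD 'X) (expr0 'X)) -mul_polyC rmorph_prod -big_split.
  by apply: eq_bigr => i _; exact: (esym (mul_polyC _ _)).
under [RHS]eq_bigr => s _ do rewrite coefZ coefXn.
rewrite -mulr_sumr sum_ind ltnS /w prodfV.
case: (boolP [forall i, (0 < f i)%N]) => hp /=.
  by case: (_ <= n)%N; rewrite ?mulr1 ?mulr0.
have -> : \prod_(i < m) ((f i : nat)%:R : F) = 0.
  apply/eqP/prodf_eq0; case/forallPn: hp => i hi; exists i => //.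
  by move: hi; rewrite lt0n negbK => /eqP ->.
by rewrite invr0 mul0r.
Qed.

Lemma t_rec m n :
  (n.+1)%:R * t m.+1 n.+1 = n%:R * t m.+1 n + (m.+1)%:R * t m n.
Proof.
set Q := P n.+2.
have hQ' : forall i, (i < n.+1)%N -> (Q^`())`_i = 1.
  move=> i hi; rewrite coef_deriv /Q coef_poly ltnS hi /w -[_^-1 *+ _]mulr_natr mulVf //.
  by rewrite pnatr_eq0.
have E1 : ((1 - 'X) * (Q ^+ m.+1)^`())`_n =
          (n.+1)%:R * t m.+1 n.+1 - n%:R * t m.+1 n.
  rewrite mulrBl mul1r coefB coefXM !coef_deriv (coefPexp _ _ _ (ltnSn _)).
  rewrite /Q; clear hQ' Q; case: n => [|n]; first by rewrite eqxx !mul0r !subr0 mul1r.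
  rewrite [(n.+1 == 0)%N]/= (_ : n.+1.-1.+1 = n.+1) // (coefPexp _ _ _ (ltnW (ltnSn _))).
  by rewrite !mulr_natl.
have E2 : ((1 - 'X) * (Q ^+ m.+1)^`())`_n = (m.+1)%:R * t m n.
  rewrite deriv_exp /= mulrnAr coefMn mulrA coefM big_ord_recl.
  rewrite big1 ?addr0; last first.
    move=> i _; rewrite mulrBl mul1r coefB coefXM /=.
    rewrite !hQ' ?subrr ?mul0r //.
    - by have := ltn_ord i; lia.
    - by rewrite /bump /=; have := ltn_ord i; lia.
  rewrite mulrBl mul1r coefB coefXM /= hQ' // subr0 mul1r subn0.
  by rewrite (coefPexp _ _ _ (ltnW (ltnSn _))) mulr_natl.
by rewrite -E2 E1 addrC subrK.
Qed.

Fixpoint cst (n m : nat) : F :=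
  match n, m with
  | 0, 0 => 1
  | 0, _.+1 => 0
  | _.+1, 0 => 0
  | n'.+1, m'.+1 => cst n' m' + n'%:R * cst n' m
  end.

Lemma t_0 m : t m 0 = (m == 0%N)%:R.
Proof. by case: m => [|m] //=; rewrite big_ord1 /w invr0 mul0r. Qed.

Lemma t_c n m : t m n * (n`!)%:R = (m`!)%:R * cst n m.
Proof.
elim: n m => [|n IH] [|m].
- by rewrite /= !mulr1.
- by rewrite t_0 /= mul0r mulr0.
- by rewrite /= mul0r mulr0.
rewrite factS natrM mulrA (mulrC _ (n.+1)%:R) t_rec mulrDl -!mulrA IH.
rewrite mulrCA IH /= factS natrM; ring.
Qed.

Definition fall j : {poly F} := \prod_(i < j) ('X - (i%:R)%:P).
Definition rise n : {poly F} := \prod_(i < n) ('X + (i%:R)%:P).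

Lemma coef_fall j m : (fall j)`_m = (stirling1 j m)%:~R.
Proof.
elim: j m => [|j IH] m.
  by rewrite /fall big_ord0 coef1; case: m.
rewrite /fall big_ord_recr /= -/(fall j) mulrBr coefB coefMX coefMC.
case: m => [|m] /=; rewrite !IH.
  by rewrite sub0r; case: j {IH} => [|j] /=; rewrite ?mulr0 ?mul0r ?oppr0.
by rewrite intrB intrM mulrC.
Qed.

Lemma coef_rise n m : (rise n)`_m = cst n m.
Proof.
elim: n m => [|n IH] m.
  by rewrite /rise big_ord0 coef1; case: m.
rewrite /rise big_ord_recr /= -/(rise n) mulrDr coefD coefMX coefMC.
case: m => [|m] /=; rewrite !IH.
  by rewrite add0r; case: n {IH} => [|n] /=; rewrite ?mulr0 ?mul0r.
by rewrite mulrC.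
Qed.

Definition lah (k j : nat) : F :=
  if j is j'.+1 then 'C(k, j')%:R * (k.+1)`!%:R / (j'.+1)`!%:R else 0.

Lemma lah_aux (a b x y fk fj : F) : (y + 1) * b = (x - y) * a ->
  fj != 0 -> y + 2 != 0 ->
  (b + a) * ((x + 2) * fk) / ((y + 2) * fj) =
  a * fk / fj + (y + x + 3) * (b * fk / ((y + 2) * fj)).
Proof.
move=> h hfj hy; apply/eqP; rewrite -subr_eq0.
have -> : (b + a) * ((x + 2) * fk) / ((y + 2) * fj) -
  (a * fk / fj + (y + x + 3) * (b * fk / ((y + 2) * fj))) =
  ((x - y) * a - (y + 1) * b) * fk / ((y + 2) * fj).
  by field; rewrite hfj hy.
by rewrite h subrr !mul0r.
Qed.

Lemma lah_rec k j : lah k.+1 j.+1 = lah k j + (j + k + 2)%:R * lah k j.+1.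
Proof.
case: j => [|j].
  rewrite /lah /= !bin0 add0r !mul1r (_ : 1`! = 1%N) // !divr1 add0n addn2.
  by rewrite [(k.+2)`!]factS natrM.
rewrite /lah binS natrD [(k.+2)`!]factS [(j.+2)`!]factS !natrM.
have e1 : ((k.+2)%:R : F) = k%:R + 2 by rewrite -natrD addn2.
have e2 : ((j.+2)%:R : F) = j%:R + 2 by rewrite -natrD addn2.
have e3 : ((j.+1 + k + 2)%:R : F) = j%:R + k%:R + 3.
  by rewrite -!natrD; congr (_%:R); lia.
rewrite e1 e2 e3.
apply: lah_aux; last 2 first.
- by rewrite -natrM; exact: (fact_neq0 j.+1).
- by rewrite -e2 pnatr_eq0.
have := mul_bin_left k j; case: (leqP j k) => hjk.
  move=> /(congr1 (fun x => x%:R : F)) /=; rewrite !natrM natrB // -natr1.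
  by [].
rewrite !bin_small //; last exact: ltnW.
by rewrite !mulr0.
Qed.

Lemma fall_shift j (c : F) :
  fall j * ('X + c%:P) = fall j.+1 + (c + j%:R) *: fall j.
Proof.
rewrite /fall big_ord_recr /= -/(fall j) -mul_polyC (mulrC _%:P) -mulrDr.
by congr (_ * _); rewrite polyCD; ring.
Qed.

Lemma rise_lah k : rise k.+1 = \sum_(0 <= j < k.+2) lah k j *: fall j.
Proof.
elim: k => [|k IH].
  rewrite big_nat_recl // big_nat1 /lah /= scale0r add0r.
  rewrite /rise /fall !big_ord1 /= bin0 mul1r divff ?scale1r //.
  by rewrite subr0 addr0. exact: (fact_neq0 1).
rewrite /rise big_ord_recr /= -/(rise k.+1) IH mulr_suml.
rewrite (eq_bigr (fun j => lah k j *: fall j.+1 +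
   (lah k j * ((k.+1)%:R + j%:R)) *: fall j)); last first.
  by move=> j _; rewrite -scalerAl fall_shift scalerDr scalerA.
rewrite big_split /= [in RHS]big_nat_recl // {2}/lah scale0r add0r.
under [in RHS]eq_bigr => j _ do rewrite lah_rec scalerDl.
rewrite big_split /=; congr (_ + _).
rewrite big_nat_recl // ?mul0r ?scale0r ?add0r.
rewrite [in RHS]big_nat_recr //= bin_small // !mul0r mulr0 scale0r addr0.
apply: eq_bigr => j _; congr (_ *: _); rewrite mulrC -natrD; congr (_%:R * _).
lia.
Qed.

Lemma stirling1_small j m : (j < m)%N -> stirling1 j m = 0.
Proof.
elim: j m => [|j IH] [|m] //= h.
by rewrite !IH // ?mulr0 ?subr0 // ltnW.
Qed.

Lemma cst_lah k m :
  cst k.+1 m = \sum_(0 <= j < k.+2) lah k j * (stirling1 j m)%:~R.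
Proof.
rewrite -coef_rise rise_lah coef_sum; apply: eq_bigr => j _.
by rewrite coefZ coef_fall.
Qed.

Lemma A_id k m : (0 < m)%N ->
  \sum_(m <= j < k.+2) ('C(k, j.-1))%:R * ((stirling1 j m)%:~R / (j`!)%:R)
  = cst k.+1 m / ((k.+1)`!)%:R.
Proof.
move=> hm; rewrite cst_lah mulr_suml (big_nat_widenl _ 0 _ _ _ (leq0n m)) big_mkcond /=.
apply: eq_bigr => -[|j] _.
  by rewrite leqn0 (gtn_eqF hm) /lah !mul0r.
case: (leqP m j.+1) => h.
  rewrite /lah /=; field.
  by rewrite fact_neq0 (fact_neq0 j.+1).
by rewrite stirling1_small // !mulr0 mul0r.
Qed.

Lemma Hm_t m n : Hm F m n = \sum_(s < n.+1) t m s.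
Proof. by rewrite Hm_poly; apply: eq_bigr => s _; rewrite coefPexp. Qed.

End S.
Arguments telescope {F}.
Arguments fact_neq0 {F}.

Theorem theorem9 (R : realType) (r : R[i]) (m n : nat) (hm : (0 < m)%N) (hn : (0 < n)%N) :
  \sum_(0 <= k < n.+1)
     (-1) ^+ k * gbinom (r - 1) k *
     \sum_(m <= j < k.+2)
        ('C(k, j.-1))%:R * ((stirling1 j m)%:~R / (j`!)%:R)
  = (-1) ^+ n * gbinom (r - 1) n * ((m`!)%:R)^-1 * Hm _ m n.+1
    - ((m`!)%:R)^-1 * \sum_(0 <= k < n.+1) (-1) ^+ k * gbinom r k * Hm _ m k
  /\
  \sum_(0 <= k < n.+1) (-1) ^+ k / (k.+1)%:R * gbinom (r - 1) k
  = (-1) ^+ n * gbinom (r - 1) n * harm _ n.+1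
    - \sum_(0 <= k < n.+1) (-1) ^+ k * gbinom r k * harm _ k.
Proof.
split.
  rewrite (telescope r _ (fun k => ((m`!)%:R)^-1 * Hm _ m k)).
  - congr (_ - _); first by rewrite mulrA.
    by rewrite mulr_sumr; apply: eq_bigr => k _; rewrite mulrCA.
  - by rewrite Hm_t big_ord1 t_0 (gtn_eqF hm) mulr0.
  move=> k /=; rewrite !Hm_t big_ord_recr /= addrC -mulrBr addrK A_id //.
  apply: (mulfI (fact_neq0 m)).
  rewrite [RHS]mulrA mulfV ?fact_neq0 // mul1r mulrA -t_c mulfK //; exact: fact_neq0.
rewrite (eq_bigr (fun k => (-1) ^+ k * gbinom (r - 1) k * ((k.+1)%:R)^-1));
  last by move=> k _; rewrite mulrAC.
rewrite (telescope r _ (harm _)) //.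
- by rewrite /harm big_geq.
by move=> k; rewrite /harm big_nat_recr //= addrC addrK.
Qed.
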